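(* Let $\beta\in(0,1)$ and run the general conversion scheme below. For $t\in[T]$ let $\mathbf{Y}_t$ be the random point equal to $\mathbf{y}_s$ with probability $q_{t,s}:=\beta^{t-s}\frac{1-\beta}{1-\beta^t}$ ($s=1,\dots,t$), and $\overline{\mathbf{y}}_t:=\mathbb{E}_{\mathbf{Y}_t}[\mathbf{Y}_t]=\frac{1-\beta}{1-\beta^t}\sum_{s=1}^t\beta^{t-s}\mathbf{y}_s$. Then $$\mathbb{E}_\tau\mathbb{E}_{\mathbf{Y}_\tau}\|\mathbf{Y}_\tau-\overline{\mathbf{y}}_\tau\|^2\le\frac2T\,\mathbb{E}\sum_{t=1}^T\|\Delta_t\|^2+\frac{4\beta}{(1-\beta)^2T}\,\mathbb{E}\sum_{t=1}^T\|\mathbf{x}_t-\mathbf{x}_{t-1}\|^2.$$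
   Context: Norms are Euclidean. General conversion scheme: input $\mathbf{x}_0=\mathbf{w}_0\in\mathbb{R}^d$, $T$, $\mu\ge0$, online learner $\mathcal{A}$. For $t=1,\dots,T$: receive $\Delta_t$ from $\mathcal{A}$; choose $\mathbf{x}_t$ arbitrarily; $\mathbf{w}_t=\mathbf{x}_t+\Delta_t$; $\mathbf{y}_t=\mathbf{x}_t+s_t\Delta_t$ with $s_t\sim\mathrm{Unif}[0,1]$ i.i.d.; $\mathbf{g}_t$ is a stochastic gradient at $\mathbf{y}_t$; send $\ell_t(\mathbf{v})=\langle\mathbf{g}_t,\mathbf{v}\rangle+\frac\mu2\|\mathbf{v}\|^2$ to $\mathcal{A}$. The random index $\tau\in[T]$ is independent of the algorithm with $\Pr(\tau=t)=\frac{1-\beta^t}{T}$ ($t\le T-1$), $\Pr(\tau=T)=\frac{1-\beta^T}{(1-\beta)T}$; $\mathbb{E}_\tau$ is expectation over $\tau$ and all algorithmic randomness. *)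

(* Defs.v *)
From HB Require Import structures.
From mathcomp Require Import all_boot all_order all_algebra.
From mathcomp Require Import all_classical all_reals all_analysis.
Set Implicit Arguments. Unset Strict Implicit. Unset Printing Implicit Defensive.
Import Order.TTheory GRing.Theory Num.Theory.
Local Open Scope ring_scope.

Definition sqnorm (R : realType) (n : nat) (v : 'rV[R]_n) : R :=
  \sum_(i < n) (v ord0 i) ^+ 2.

Definition qw (R : realType) (beta : R) (t s : nat) : R :=
  beta ^+ (t - s) * (1 - beta) / (1 - beta ^+ t).

(* Pr(tau = t) *)
Definition ptau (R : realType) (beta : R) (T t : nat) : R :=
  if (t < T)%N then (1 - beta ^+ t) / T%:R
  else (1 - beta ^+ T) / ((1 - beta) * T%:R).

Definition ybar (R : realType) (n : nat) (beta : R) (y : nat -> 'rV[R]_n) (t : nat)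
  : 'rV[R]_n :=
  \sum_(1 <= s < t.+1) qw beta t s *: y s.

(* E_tau E_{Y_tau} ||Y_tau - ybar_tau||^2 for one realization of the algorithm *)
Definition var_tau (R : realType) (n : nat) (beta : R) (T : nat)
  (y : nat -> 'rV[R]_n) : R :=
  \sum_(1 <= t < T.+1) ptau beta T t *
     \sum_(1 <= s < t.+1) qw beta t s * sqnorm (y s - ybar beta y t).

(* Main.v *)
Require Import Defs.
From HB Require Import structures.
From mathcomp Require Import all_boot all_order all_algebra.
From mathcomp Require Import all_classical all_reals all_analysis.
From mathcomp Require Import ring lra.
From mathcomp Require Import measurable_realfun measurable_fun_approximation.
Import Order.TTheory GRing.Theory Num.Theory.
Local Open Scope ring_scope.

Section Comb.
Variable R : realType.
Variable b : R.
Hypothesis b0 : 0 < b.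
Hypothesis b1 : b < 1.

Definition geo n (F : nat -> R) := \sum_(1 <= s < n.+1) b ^+ (n - s) * F s.

Lemma geo0 F : geo 0 F = 0.
Proof. by rewrite /geo big_geq. Qed.

Lemma geoS n F : geo n.+1 F = b * geo n F + F n.+1.
Proof.
rewrite /geo big_nat_recr //= subnn expr0 mul1r; congr (_ + _).
rewrite mulr_sumr; apply: eq_big_nat => s /andP[_ hs].
by rewrite mulrA -exprS subSn.
Qed.

Lemma geo_ext n F G : (forall s, (1 <= s <= n)%N -> F s = G s) -> geo n F = geo n G.
Proof.
move=> h; apply: eq_big_nat => s /andP[h1 h2]; rewrite h // h1 /=; exact: h2.
Qed.

Lemma geoD n F G : geo n (fun s => F s + G s) = geo n F + geo n G.
Proof. by rewrite /geo -big_split; apply: eq_bigr => s _; rewrite mulrDr. Qed.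

Lemma geoZ n c F : geo n (fun s => c * F s) = c * geo n F.
Proof. by rewrite /geo mulr_sumr; apply: eq_bigr => s _; rewrite mulrCA. Qed.

Lemma geo_le n F G : (forall s, F s <= G s) -> geo n F <= geo n G.
Proof.
move=> h; apply: ler_sum => s _; apply: ler_wpM2l; last exact: h.
by rewrite exprn_ge0 // ltW.
Qed.

Lemma geo_ge0 n F : (forall s, 0 <= F s) -> 0 <= geo n F.
Proof.
move=> h; apply: sumr_ge0 => s _; apply: mulr_ge0; last exact: h.
by rewrite exprn_ge0 // ltW.
Qed.

Lemma geoA n : geo n (fun _ => 1) <= 1 / (1 - b).
Proof.
elim: n => [|n IH]; first by rewrite geo0 divr_ge0 // subr_ge0 ltW.
rewrite geoS.
have h : b * geo n (fun _ => 1) <= b * (1 / (1 - b)) by rewrite ler_wpM2l // ltW.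
apply: le_trans (lerD h (lexx 1)) _.
have -> : b * (1 / (1 - b)) + 1 = 1 / (1 - b).
  by field; rewrite subr_eq0 gt_eqF.
by [].
Qed.


Lemma b1' : 1 - b != 0.
Proof. by rewrite subr_eq0 gt_eqF. Qed.

Lemma geoK n : geo n (fun s => (n.+1 - s)%:R) <= 1 / (1 - b) ^+ 2.
Proof.
elim: n => [|n IH]; first by rewrite geo0 divr_ge0 // exprn_ge0 // subr_ge0 ltW.
rewrite geoS subSnn.
rewrite (@geo_ext n _ (fun s => (n.+1 - s)%:R + 1)); last first.
  by move=> s /andP[_ hs]; rewrite subSn ?leqW // -addn1 natrD.
rewrite geoD.
have h : b * (geo n (fun s => (n.+1 - s)%:R) + geo n (fun=> 1)) <=
         b * (1 / (1 - b) ^+ 2 + 1 / (1 - b)).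
  by apply: ler_wpM2l; [exact: ltW | apply: lerD; [exact: IH | exact: geoA]].
apply: le_trans (lerD h (lexx 1)) _.
rewrite le_eqVlt; apply/orP; left; apply/eqP.
by field; rewrite b1'.
Qed.

Variable d : nat -> R.
Hypothesis d0 : forall k, 0 <= d k.

Definition Mq n := geo n (fun s => \sum_(s.+1 <= k < n.+1) d k).
Definition Kq n := geo n (fun s => (n.+1 - s)%:R).
Definition Vq n := geo n (fun s => (n - s)%:R * \sum_(s.+1 <= k < n.+1) d k).

Lemma MqS n : Mq n.+1 = b * (Mq n + d n.+1 * geo n (fun=> 1)).
Proof.
rewrite /Mq geoS big_geq // addr0.
rewrite (@geo_ext n _ (fun s => \sum_(s.+1 <= k < n.+1) d k + d n.+1 * 1)); last first.
  by move=> s /andP[_ hs]; rewrite big_nat_recr //= mulr1.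
by rewrite geoD geoZ.
Qed.

Lemma Mq_le n : Mq n <= b / (1 - b) * geo n d.
Proof.
elim: n => [|n IH]; first by rewrite /Mq !geo0 mulr0.
rewrite MqS geoS.
have h1 : b * Mq n <= b * (b / (1 - b) * geo n d) by apply: ler_wpM2l; [exact: ltW | exact: IH].
have h2 : b * (d n.+1 * geo n (fun=> 1)) <= b * (d n.+1 * (1 / (1 - b))).
  by apply: ler_wpM2l; [exact: ltW | apply: ler_wpM2l; [exact: d0 | exact: geoA]].
have -> : b / (1 - b) * (b * geo n d + d n.+1) =
   b * (b / (1 - b) * geo n d) + b * (d n.+1 * (1 / (1 - b))).
  by field; rewrite b1'.
by rewrite mulrDr; apply: lerD.
Qed.

Lemma VqS n : Vq n.+1 = b * (Vq n + Mq n + d n.+1 * Kq n).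
Proof.
rewrite /Vq geoS subnn mul0r addr0.
rewrite (@geo_ext n _ (fun s => ((n - s)%:R * \sum_(s.+1 <= k < n.+1) d k
    + \sum_(s.+1 <= k < n.+1) d k) + d n.+1 * (n.+1 - s)%:R)); last first.
  move=> s /andP[_ hs]; rewrite big_nat_recr //= subSn // -addn1 natrD.
  by ring.
by rewrite !geoD geoZ.
Qed.

Lemma mainV n : (1 - b) * \sum_(1 <= t < n.+1) Vq t + b * Vq n
   + b ^+ 2 / (1 - b) ^+ 2 * geo n d
   <= (b / (1 - b) ^+ 2 + b ^+ 2 / (1 - b) ^+ 2) * \sum_(1 <= k < n.+1) d k.
Proof.
elim: n => [|n IH].
  by rewrite !big_geq // /Vq !geo0 !mulr0 !addr0.
rewrite !(big_nat_recr n.+1) //= VqS geoS.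
have h1 : b * Mq n <= b * (b / (1 - b) * geo n d) by apply: ler_wpM2l; [exact: ltW | exact: Mq_le].
have h2 : b * (d n.+1 * Kq n) <= b * (d n.+1 * (1 / (1 - b) ^+ 2)).
  by apply: ler_wpM2l; [exact: ltW | apply: ler_wpM2l; [exact: d0 | exact: geoK]].
set S := \sum_(1 <= t < n.+1) Vq t.
set Sd := \sum_(1 <= k < n.+1) d k.
rewrite -subr_ge0.
set L := (X in 0 <= X).
have -> : L = ((b / (1 - b) ^+ 2 + b ^+ 2 / (1 - b) ^+ 2) * Sd -
   ((1 - b) * S + b * Vq n + b ^+ 2 / (1 - b) ^+ 2 * geo n d))
  + (b * (b / (1 - b) * geo n d) - b * Mq n)
  + (b * (d n.+1 * (1 / (1 - b) ^+ 2)) - b * (d n.+1 * Kq n)).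
  by rewrite /L; field; rewrite b1'.
by apply: addr_ge0; [apply: addr_ge0|]; rewrite subr_ge0.
Qed.

Lemma mainE (D : nat -> R) n :
  (1 - b) * \sum_(1 <= t < n.+1) geo t D + b * geo n D = \sum_(1 <= k < n.+1) D k.
Proof.
elim: n => [|n IH]; first by rewrite !big_geq // geo0 !mulr0 addr0.
by rewrite !(big_nat_recr n.+1) //= geoS -IH; ring.
Qed.


Lemma bt_neq (t : nat) : (0 < t)%N -> 1 - b ^+ t != 0.
Proof. by move=> t0; rewrite subr_eq0 eq_sym lt_eqF // expr_lt1 // ltW. Qed.

Lemma weights T (G : nat -> nat -> R) : (0 < T)%N ->
 \sum_(1 <= t < T.+1) ptau b T t * \sum_(1 <= s < t.+1) qw b t s * G t s
 = T%:R^-1 * ((1 - b) * \sum_(1 <= t < T.+1) geo t (G t) + b * geo T (G T)).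
Proof.
move=> T0.
have hq : forall t, \sum_(1 <= s < t.+1) qw b t s * G t s
   = (1 - b) / (1 - b ^+ t) * geo t (G t).
  move=> t; rewrite /geo mulr_sumr; apply: eq_bigr => s _.
  by rewrite /qw; ring.
have TR : T%:R != 0 :> R by rewrite pnatr_eq0 -lt0n.
rewrite big_nat_recr //= [in RHS](big_nat_recr T) //=.
rewrite (@eq_big_nat _ _ _ 1 T _ (fun t => T%:R^-1 * ((1 - b) * geo t (G t)))); last first.
  move=> t /andP[h1 h2]; rewrite hq /ptau h2; field.
  by rewrite TR bt_neq.
rewrite -mulr_sumr hq /ptau ltnn -mulr_sumr.
field.
by rewrite TR b1' bt_neq.
Qed.


Lemma comb T (D : nat -> R) : (0 < T)%N -> (forall k, 0 <= D k) ->
 \sum_(1 <= t < T.+1) ptau b T t * \sum_(1 <= s < t.+1) qw b t s *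
    (2 * D s + 2 * ((t - s)%:R * \sum_(s.+1 <= k < t.+1) d k))
 <= 2 / T%:R * \sum_(1 <= t < T.+1) D t
    + 4 * b / ((1 - b) ^+ 2 * T%:R) * \sum_(1 <= t < T.+1) d t.
Proof.
move=> T0 D0.
have TR : T%:R != 0 :> R by rewrite pnatr_eq0 -lt0n.
rewrite weights //.
have e : forall t, geo t (fun s => 2 * D s + 2 * ((t - s)%:R * \sum_(s.+1 <= k < t.+1) d k))
   = 2 * geo t D + 2 * Vq t by move=> t; rewrite geoD !geoZ.
rewrite (eq_bigr (fun t => 2 * geo t D + 2 * Vq t)); last by move=> t _; exact: e.
rewrite e big_split /= -!mulr_sumr.
have -> : (1 - b) * (2 * \sum_(1 <= i < T.+1) geo i D + 2 * \sum_(1 <= i < T.+1) Vq i) +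
   b * (2 * geo T D + 2 * Vq T) =
   2 * ((1 - b) * \sum_(1 <= i < T.+1) geo i D + b * geo T D) +
   2 * ((1 - b) * \sum_(1 <= i < T.+1) Vq i + b * Vq T) by ring.
rewrite mainE.
set X := (1 - b) * \sum_(1 <= i < T.+1) Vq i + b * Vq T.
set Sd := \sum_(1 <= t < T.+1) d t.
set C := b / (1 - b) ^+ 2 + b ^+ 2 / (1 - b) ^+ 2.
have hX : X <= C * Sd.
  apply: le_trans (mainV T).
  rewrite lerDl; apply: mulr_ge0; last exact: geo_ge0.
  by apply: divr_ge0; apply: exprn_ge0; [exact: ltW | rewrite subr_ge0; exact: ltW].
rewrite -subr_ge0.
set L := (X in 0 <= X).
have -> : L = 2 / T%:R * (C * Sd - X) + 2 / T%:R * (b / (1 - b)) * Sd.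
  by rewrite /L /C; field; rewrite TR b1'.
apply: addr_ge0; apply: mulr_ge0.
- by rewrite divr_ge0 // ler0n.
- by rewrite subr_ge0.
- apply: mulr_ge0; first by rewrite divr_ge0 // ler0n.
  by apply: divr_ge0; [exact: ltW | rewrite subr_ge0; exact: ltW].
- by apply: sumr_ge0 => k _; exact: d0.
Qed.

End Comb.
Arguments geo {R} b n F.
Arguments bt_neq {R b}.
Arguments b1' {R b}.
Arguments comb {R b}.
Section Vec.
Variable R : realType.
Variable n : nat.

Lemma sqnorm_ge0 (v : 'rV[R]_n) : 0 <= sqnorm v.
Proof. by apply: sumr_ge0 => i _; exact: sqr_ge0. Qed.

Lemma var_scalar (r : seq nat) (q a : nat -> R) (z : R) : \sum_(s <- r) q s = 1 ->
  \sum_(s <- r) q s * (a s - z) ^+ 2 =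
  \sum_(s <- r) q s * (a s - \sum_(j <- r) q j * a j) ^+ 2
   + (\sum_(j <- r) q j * a j - z) ^+ 2.
Proof.
move=> hq; set m := \sum_(j <- r) q j * a j.
have h0 : \sum_(s <- r) q s * (a s - m) = 0.
  rewrite (eq_bigr (fun s => q s * a s - m * q s)); last by move=> s _; ring.
  by rewrite sumrB -mulr_sumr hq mulr1 subrr.
rewrite (eq_bigr (fun s => q s * (a s - m) ^+ 2 + (2 * (m - z)) * (q s * (a s - m))
   + (m - z) ^+ 2 * q s)); last by move=> s _; ring.
by rewrite !big_split /= -!mulr_sumr h0 hq; ring.
Qed.

Lemma var_le (r : seq nat) (q : nat -> R) (y : nat -> 'rV[R]_n) (z : 'rV[R]_n) :
  \sum_(s <- r) q s = 1 ->
  \sum_(s <- r) q s * sqnorm (y s - \sum_(j <- r) q j *: y j)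
   <= \sum_(s <- r) q s * sqnorm (y s - z).
Proof.
move=> hq; rewrite /sqnorm.
rewrite (eq_bigr (fun s => \sum_(i < n) q s * (y s ord0 i - \sum_(j <- r) q j * y j ord0 i) ^+ 2)); last first.
  move=> s _; rewrite mulr_sumr; apply: eq_bigr => i _.
  by rewrite !mxE summxE; congr (_ * (_ - _) ^+ 2); apply: eq_bigr => j _; rewrite mxE.
rewrite [leRHS](eq_bigr (fun s => \sum_(i < n) q s * (y s ord0 i - z ord0 i) ^+ 2)); last first.
  by move=> s _; rewrite mulr_sumr; apply: eq_bigr => i _; rewrite !mxE.
rewrite exchange_big [leRHS]exchange_big /=.
apply: ler_sum => i _.
by rewrite [leRHS](var_scalar _ _ _ _ hq) lerDl sqr_ge0.
Qed.

Lemma sq_split (u v : 'rV[R]_n) (c : R) : 0 <= c <= 1 ->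
  sqnorm (u + c *: v) <= 2 * sqnorm v + 2 * sqnorm u.
Proof.
move=> /andP[c0 c1]; rewrite /sqnorm !mulr_sumr -big_split /=.
apply: ler_sum => i _; rewrite !mxE.
have hc : c ^+ 2 <= 1 by rewrite exprn_ile1.
set a := u ord0 i; set e := v ord0 i.
have h1 := sqr_ge0 (a - c * e).
have h2 : 0 <= e ^+ 2 * (1 - c ^+ 2) by rewrite mulr_ge0 ?sqr_ge0 // subr_ge0.
have -> : 2 * e ^+ 2 + 2 * a ^+ 2 = (a + c * e) ^+ 2 + ((a - c * e) ^+ 2 + 2 * (e ^+ 2 * (1 - c ^+ 2))) by ring.
by rewrite lerDl; apply: addr_ge0 => //; apply: mulr_ge0.
Qed.

Lemma cs (m p : nat) (u : nat -> R) :
  (\sum_(m <= k < p) u k) ^+ 2 <= (p - m)%:R * \sum_(m <= k < p) u k ^+ 2.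
Proof.
set S := \sum_(m <= k < p) u k; set Q := \sum_(m <= k < p) u k ^+ 2.
set N : R := (p - m)%:R.
have inner c : \sum_(m <= j < p) (c - u j) ^+ 2 = c ^+ 2 * N - 2 * c * S + Q.
  rewrite (eq_bigr (fun j => c ^+ 2 + (- (2 * c * u j)) + u j ^+ 2)); last by move=> j _; ring.
  by rewrite !big_split /= sumrN sumr_const_nat -mulr_sumr /S /Q /N mulr_natr.
have outer : \sum_(m <= k < p) (u k ^+ 2 * N - 2 * u k * S + Q) = 2 * (N * Q) - 2 * S ^+ 2.
  rewrite (eq_bigr (fun k => u k ^+ 2 * N + (- (2 * S * u k)) + Q)); last by move=> k _; ring.
  rewrite !big_split /= sumrN sumr_const_nat -mulr_sumr -mulr_suml -mulr_natr.
  rewrite /Q /S /N; ring.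
have h : 0 <= \sum_(m <= k < p) \sum_(m <= j < p) (u k - u j) ^+ 2.
  by apply: sumr_ge0 => k _; apply: sumr_ge0 => j _; exact: sqr_ge0.
move: h; rewrite (eq_bigr (fun k => u k ^+ 2 * N - 2 * u k * S + Q)); last by move=> k _; rewrite inner.
rewrite outer; lra.
Qed.

Lemma tele_bound (x : nat -> 'rV[R]_n) (s t : nat) : (s <= t)%N ->
  sqnorm (x s - x t) <= (t - s)%:R * \sum_(s.+1 <= k < t.+1) sqnorm (x k - x k.-1).
Proof.
move=> st; rewrite /sqnorm.
rewrite (exchange_big_dep xpredT) //= mulr_sumr.
apply: ler_sum => i _.
have -> : (x s - x t) ord0 i = - \sum_(s.+1 <= k < t.+1) (x k ord0 i - x k.-1 ord0 i).
  rewrite big_add1 /= telescope_sumr // !mxE; ring.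
rewrite sqrrN.
have := cs s.+1 t.+1 (fun k => x k ord0 i - x k.-1 ord0 i).
rewrite subSS => h; apply: le_trans h _.
rewrite le_eqVlt; apply/orP; left; apply/eqP; congr (_ * _).
by apply: eq_bigr => k _; rewrite !mxE.
Qed.

End Vec.
Arguments var_le {R n}.
Arguments sq_split {R n}.
Arguments tele_bound {R n}.
Arguments sqnorm_ge0 {R n}.

Section Point.
Variable R : realType.
Variable b : R.
Hypothesis b0 : 0 < b.
Hypothesis b1 : b < 1.

Lemma geo1 t : geo b t (fun=> 1) * (1 - b) = 1 - b ^+ t.
Proof.
elim: t => [|t IH]; first by rewrite geo0 mul0r expr0 subrr.
by rewrite geoS mulrDl -mulrA IH exprS; ring.
Qed.

Lemma qw_sum t : (0 < t)%N -> \sum_(1 <= s < t.+1) qw b t s = 1.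
Proof.
move=> t0.
have -> : \sum_(1 <= s < t.+1) qw b t s = (1 - b) / (1 - b ^+ t) * geo b t (fun=> 1).
  rewrite /geo mulr_sumr; apply: eq_bigr => s _; rewrite /qw; ring.
rewrite -geo1; field.
rewrite (b1' b1) /=; apply/eqP => h; move: (bt_neq b0 b1 _ t0).
by rewrite -geo1 h mul0r eqxx.
Qed.

Lemma qw_ge0 t s : (0 < t)%N -> 0 <= qw b t s.
Proof.
move=> t0; rewrite /qw; apply: divr_ge0.
  by apply: mulr_ge0; [apply: exprn_ge0; exact: ltW | rewrite subr_ge0; exact: ltW].
by rewrite subr_ge0 exprn_ile1 // ltW.
Qed.

Lemma ptau_ge0 T t : 0 <= ptau b T t.
Proof.
have h1 : forall k, 0 <= 1 - b ^+ k by move=> k; rewrite subr_ge0 exprn_ile1 // ltW.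
rewrite /ptau; case: ifP => _; apply: divr_ge0 => //.
by apply: mulr_ge0; [rewrite subr_ge0 ltW | rewrite ler0n].
Qed.

Variable dim : nat.
Variables (x Delta : nat -> 'rV[R]_dim) (sg : nat -> R).
Hypothesis hsg : forall t, 0 <= sg t <= 1.

Lemma per_t t : (0 < t)%N ->
  \sum_(1 <= s < t.+1) qw b t s * sqnorm ((fun t => x t + sg t *: Delta t) s
        - ybar b (fun t => x t + sg t *: Delta t) t)
  <= \sum_(1 <= s < t.+1) qw b t s * (2 * sqnorm (Delta s)
        + 2 * ((t - s)%:R * \sum_(s.+1 <= k < t.+1) sqnorm (x k - x k.-1))).
Proof.
move=> t0; rewrite /ybar.
apply: le_trans (var_le _ _ (fun t => x t + sg t *: Delta t) (x t) (qw_sum t t0)) _.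
apply: ler_sum_nat => s /andP[s1 st].
apply: ler_wpM2l; first exact: qw_ge0.
have -> : x s + sg s *: Delta s - x t = (x s - x t) + sg s *: Delta s by rewrite addrAC.
apply: le_trans (sq_split _ _ _ (hsg s)) _.
apply: lerD; first exact: lexx.
apply: ler_wpM2l; first by rewrite ler0n.
exact: tele_bound.
Qed.

Lemma pointwise T : (0 < T)%N ->
  var_tau b T (fun t => x t + sg t *: Delta t) <=
  2 / T%:R * \sum_(1 <= t < T.+1) sqnorm (Delta t)
    + 4 * b / ((1 - b) ^+ 2 * T%:R) * \sum_(1 <= t < T.+1) sqnorm (x t - x t.-1).
Proof.
move=> T0.
have := comb b0 b1 (fun k => sqnorm (x k - x k.-1)) (fun k => sqnorm_ge0 _) T (fun k => sqnorm (Delta k)) T0 (fun k => sqnorm_ge0 _).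
apply: le_trans; rewrite /var_tau.
apply: ler_sum_nat => t /andP[t1 tT].
apply: ler_wpM2l; first exact: ptau_ge0.
exact: per_t.
Qed.

End Point.

Section Meas.
Context d (Om : measurableType d) (R : realType).

Definition MV n (v : Om -> 'rV[R]_n) := forall i, measurable_fun setT (fun w => v w ord0 i).
Arguments MV {n} v.

Lemma MV_add n (u v : Om -> 'rV[R]_n) : MV u -> MV v -> MV (fun w => u w + v w).
Proof.
move=> hu hv i.
have -> : (fun w => (u w + v w) ord0 i) = (fun w => u w ord0 i) \+ (fun w => v w ord0 i).
  by apply/funext => w; rewrite mxE.
exact: measurable_funD.
Qed.

Lemma MV_sub n (u v : Om -> 'rV[R]_n) : MV u -> MV v -> MV (fun w => u w - v w).
Proof.
move=> hu hv i.
have -> : (fun w => (u w - v w) ord0 i) = (fun w => u w ord0 i) \- (fun w => v w ord0 i).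
  by apply/funext => w; rewrite !mxE.
exact: measurable_funB.
Qed.

Lemma MV_scale n (c : Om -> R) (v : Om -> 'rV[R]_n) :
  measurable_fun setT c -> MV v -> MV (fun w => c w *: v w).
Proof.
move=> hc hv i.
have -> : (fun w => (c w *: v w) ord0 i) = c \* (fun w => v w ord0 i).
  by apply/funext => w; rewrite !mxE.
exact: measurable_funM.
Qed.

Lemma M_sum (I : Type) (r : seq I) (f : I -> Om -> R) :
  (forall t, measurable_fun setT (f t)) ->
  measurable_fun setT (fun w => \sum_(t <- r) f t w).
Proof. by move=> h; apply: measurable_sum. Qed.

Lemma M_sumcst (I : Type) (r : seq I) (c : I -> R) (f : I -> Om -> R) :
  (forall t, measurable_fun setT (f t)) ->
  measurable_fun setT (fun w => \sum_(t <- r) c t * f t w).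
Proof.
move=> h; apply: (M_sum _ r (fun t w => c t * f t w)) => t.
by apply: measurable_funM => //; exact: measurable_cst.
Qed.

Lemma MV_sumZ n (r : seq nat) (q : nat -> R) (v : nat -> Om -> 'rV[R]_n) :
  (forall s, MV (v s)) -> MV (fun w => \sum_(s <- r) q s *: v s w).
Proof.
move=> hv i.
have -> : (fun w => (\sum_(s <- r) q s *: v s w) ord0 i)
   = (fun w => \sum_(s <- r) q s * v s w ord0 i).
  by apply/funext => w; rewrite summxE; apply: eq_bigr => s _; rewrite mxE.
by apply: (M_sumcst _ r q (fun t w => v t w ord0 i)) => t; exact: hv.
Qed.

Lemma M_sqnorm n (v : Om -> 'rV[R]_n) : MV v -> measurable_fun setT (fun w => sqnorm (v w)).
Proof.
move=> hv; rewrite /sqnorm.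
apply: (M_sum _ _ (fun i w => v w ord0 i ^+ 2)) => i.
exact: measurable_funX.
Qed.

End Meas.
Arguments MV {d Om R n} v.

Theorem lemma4 (R : realType) (disp : measure_display) (Omega : measurableType disp)
  (P : probability Omega R) (dim T : nat) (beta : R)
  (x Delta : nat -> Omega -> 'rV[R]_dim) (s : nat -> Omega -> R) :
  (0 < T)%N -> 0 < beta < 1 ->
  (forall t (i : 'I_dim), measurable_fun setT (fun w => x t w ord0 i)) ->
  (forall t (i : 'I_dim), measurable_fun setT (fun w => Delta t w ord0 i)) ->
  (forall t, measurable_fun setT (s t)) ->
  (forall t w, 0 <= s t w <= 1) ->
  let y := fun w t => x t w + s t w *: Delta t w in
  (\int[P]_(w in setT) (var_tau beta T (y w))%:E <=
     (2 / T%:R)%:E *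
       \int[P]_(w in setT) (\sum_(1 <= t < T.+1) sqnorm (Delta t w))%:E
   + (4 * beta / ((1 - beta) ^+ 2 * T%:R))%:E *
       \int[P]_(w in setT) (\sum_(1 <= t < T.+1) sqnorm (x t w - x t.-1 w))%:E)%E.
Proof.
move=> T0 /andP[b0 b1] mx mD ms hs; cbv zeta.
pose y := fun w t => x t w + s t w *: Delta t w.
change (\int[P]_(w in setT) (var_tau beta T (y w))%:E <=
     (2 / T%:R)%:E *
       \int[P]_(w in setT) (\sum_(1 <= t < T.+1) sqnorm (Delta t w))%:E
   + (4 * beta / ((1 - beta) ^+ 2 * T%:R))%:E *
       \int[P]_(w in setT) (\sum_(1 <= t < T.+1) sqnorm (x t w - x t.-1 w))%:E)%E.
set A := fun w => \sum_(1 <= t < T.+1) sqnorm (Delta t w).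
set B := fun w => \sum_(1 <= t < T.+1) sqnorm (x t w - x t.-1 w).
set c1 := 2 / T%:R.
set c2 := 4 * beta / ((1 - beta) ^+ 2 * T%:R).
have c10 : 0 <= c1 by rewrite /c1 divr_ge0 // ler0n.
have c20 : 0 <= c2.
  rewrite /c2; apply: divr_ge0; first by apply: mulr_ge0; [rewrite ler0n | exact: ltW].
  by apply: mulr_ge0; [apply: exprn_ge0; rewrite subr_ge0 ltW | rewrite ler0n].
have A0 : forall w, 0 <= A w by move=> w; apply: sumr_ge0 => t _; exact: sqnorm_ge0.
have B0 : forall w, 0 <= B w by move=> w; apply: sumr_ge0 => t _; exact: sqnorm_ge0.
have mA : measurable_fun setT A.
  by apply: M_sum => t; apply: M_sqnorm => i; exact: mD.
have mB : measurable_fun setT B.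
  by apply: M_sum => t; apply: M_sqnorm; apply: MV_sub => i; exact: mx.
have my : forall t, MV (fun w => y w t).
  move=> t; apply: MV_add; first by move=> i; exact: mx.
  by apply: MV_scale; [exact: ms | move=> i; exact: mD].
have mf : measurable_fun setT (fun w => var_tau beta T (y w)).
  rewrite /var_tau; apply: M_sumcst => t; apply: M_sumcst => u.
  apply: M_sqnorm; apply: MV_sub; first exact: my.
  by rewrite /ybar; apply: MV_sumZ.
have f0 : forall w, 0 <= var_tau beta T (y w).
  move=> w; apply: sumr_ge0 => t _; apply: mulr_ge0; first exact: ptau_ge0.
  apply: sumr_ge0 => u _; apply: mulr_ge0; last exact: sqnorm_ge0.
  rewrite /qw; apply: divr_ge0.
    by apply: mulr_ge0; [apply: exprn_ge0; exact: ltW | rewrite subr_ge0; exact: ltW].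
  by rewrite subr_ge0 exprn_ile1 // ltW.
have mAE : measurable_fun setT (fun w => (A w)%:E) by apply/measurable_EFinP.
have mBE : measurable_fun setT (fun w => (B w)%:E) by apply/measurable_EFinP.
have mcA : measurable_fun setT (fun w => (c1%:E * (A w)%:E)%E).
  have -> : (fun w => (c1%:E * (A w)%:E)%E) = EFin \o (fun w => c1 * A w).
    by apply/funext => w; rewrite /= EFinM.
  by apply/measurable_EFinP; apply: measurable_funM => //; exact: measurable_cst.
have mcB : measurable_fun setT (fun w => (c2%:E * (B w)%:E)%E).
  have -> : (fun w => (c2%:E * (B w)%:E)%E) = EFin \o (fun w => c2 * B w).
    by apply/funext => w; rewrite /= EFinM.
  by apply/measurable_EFinP; apply: measurable_funM => //; exact: measurable_cst.
have H2 : (\int[P]_(w in setT) (c1 * A w + c2 * B w)%:E =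
   c1%:E * \int[P]_(w in setT) (A w)%:E + c2%:E * \int[P]_(w in setT) (B w)%:E)%E.
  under eq_integral do rewrite EFinD (EFinM c1) (EFinM c2).
  rewrite ge0_integralD //; last 2 first.
  - by move=> w _; rewrite mule_ge0 // lee_fin.
  - by move=> w _; rewrite mule_ge0 // lee_fin.
  rewrite ge0_integralZl //; last by move=> w _; rewrite lee_fin.
  rewrite ge0_integralZl //; last by move=> w _; rewrite lee_fin.
rewrite -H2.
apply: ge0_le_integral => //.
- by move=> w _; rewrite lee_fin.
- by apply/measurable_EFinP.
- apply/measurable_EFinP; apply: measurable_funD; apply: measurable_funM => //;
    exact: measurable_cst.
- move=> w _; rewrite lee_fin.
  exact: (@pointwise _ _ b0 b1 _ (fun t => x t w) (fun t => Delta t w) (fun t => s t w) (fun t => hs t w) T T0).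
Qed.
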